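(* Let $X$ be a metric space and let $C(X)_K=\{f\in\mathbb{R}^X\colon \overline{D_f}\text{ is compact}\}$, where $D_f$ is the set of points of discontinuity of $f$. The following are equivalent: (1) $C(X)_K$ is closed under uniform limits (if a sequence in $C(X)_K$ converges uniformly on $X$ to $f\in\mathbb{R}^X$, then $f\in C(X)_K$); (2) the set of all non-isolated points of $X$ is compact; (3) $C(X)_K$ is isomorphic (as a ring) to $C(Y)$ for some topological space $Y$.
   Context: $C(Y)$ denotes the ring of all real-valued continuous functions on $Y$. *)

(* Defs.v *)
From HB Require Import structures.
From mathcomp Require Import all_boot all_order all_algebra.
From mathcomp Require Import all_classical all_reals all_analysis.
Unset Printing Implicit Defensive.
Import Order.TTheory GRing.Theory Num.Theory.
Import numFieldNormedType.Exports.
Local Open Scope classical_set_scope.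
Local Open Scope ring_scope.

Definition discont_pts {R : realType} {X : topologicalType} (f : X -> R) : set X :=
  [set x | ~ {for x, continuous f}].

Definition CXK {R : realType} (X : topologicalType) : set (X -> R) :=
  [set f | compact (closure (discont_pts f))].

Definition CY {R : realType} (Y : topologicalType) : set (Y -> R) :=
  [set f | continuous f].

Definition unif_cvg {R : realType} {X : Type} (u : nat -> X -> R) (f : X -> R) : Prop :=
  forall e : R, 0 < e -> exists N : nat, forall n, (N <= n)%N ->
    forall x, `|u n x - f x| < e.

Definition closed_unif_limits {R : realType} {X : Type} (A : set (X -> R)) : Prop :=
  forall (u : nat -> X -> R) (f : X -> R),
    (forall n, A (u n)) -> unif_cvg u f -> A f.

Definition nonisolated_pts (X : topologicalType) : set X :=
  [set x | ~ isolated setT x].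

Definition ring_isomorphic {R : realType} {X Y : Type}
    (A : set (X -> R)) (B : set (Y -> R)) : Prop :=
  exists phi : (X -> R) -> (Y -> R),
    [/\ set_bij A B phi,
        (forall f g, A f -> A g -> phi (f \+ g) = phi f \+ phi g),
        (forall f g, A f -> A g -> phi (f \* g) = phi f \* phi g) &
        phi (cst 1) = cst 1].

(* Main.v *)
Require Import Defs.
From HB Require Import structures.
From mathcomp Require Import all_boot all_order all_algebra.
From mathcomp Require Import all_classical all_reals all_analysis.
From mathcomp Require Import lra.
Import Order.TTheory GRing.Theory Num.Theory.
Import numFieldNormedType.Exports.
Local Open Scope classical_set_scope.
Local Open Scope ring_scope.


Section Basic.
Context {R : realType} {X : topologicalType}.
Implicit Types f g h : X -> R.

Lemma cxk_cont f : continuous f -> CXK X f.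
Proof.
move=> cf; rewrite /CXK /= (_ : discont_pts f = set0); first by rewrite closure0; exact: compact0.
by apply/seteqP; split => x //; rewrite /discont_pts /= => /(_ (cf x)).
Qed.

Lemma closure_sub_closed (A C : set X) : closed C -> A `<=` C -> closure A `<=` C.
Proof. by move=> cC AC; rewrite (closure_id C).1 //; exact: closureS. Qed.

Lemma cxk_sub f g h : discont_pts h `<=` discont_pts f `|` discont_pts g ->
  CXK X f -> CXK X g -> CXK X h.
Proof.
move=> sub cf cg; rewrite /CXK /=; apply: (subclosed_compact _ (compactU cf cg)).
  exact: closed_closure.
apply: closure_sub_closed; first exact: closedU (@closed_closure _ _) (@closed_closure _ _).
by move=> x /sub [] ?; [left|right]; apply: subset_closure.
Qed.

Lemma discontD f g : discont_pts (f \+ g) `<=` discont_pts f `|` discont_pts g.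
Proof.
move=> x; rewrite /discont_pts /=; apply: contra_notP => /not_orP[/contrapT cf /contrapT cg].
exact: cvgD.
Qed.

Lemma discontM f g : discont_pts (f \* g) `<=` discont_pts f `|` discont_pts g.
Proof.
move=> x; rewrite /discont_pts /=; apply: contra_notP => /not_orP[/contrapT cf /contrapT cg].
exact: cvgM.
Qed.

Lemma discontN f : discont_pts (fun x => - f x) `<=` discont_pts f `|` discont_pts f.
Proof.
move=> x; rewrite /discont_pts /=; apply: contra_notP => /not_orP[/contrapT cf _].
exact: cvgN.
Qed.

Lemma discontS f : discont_pts (fun x => Num.sqrt (f x)) `<=` discont_pts f `|` discont_pts f.
Proof.
move=> x; rewrite /discont_pts /=; apply: contra_notP => /not_orP[/contrapT cf _].
apply: (continuous_comp cf); exact: sqrt_continuous.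
Qed.

Lemma cxkD f g : CXK X f -> CXK X g -> CXK X (f \+ g).
Proof. exact/cxk_sub/discontD. Qed.
Lemma cxkM f g : CXK X f -> CXK X g -> CXK X (f \* g).
Proof. exact/cxk_sub/discontM. Qed.
Lemma cxkN f : CXK X f -> CXK X (fun x => - f x).
Proof. by move=> cf; exact: (@cxk_sub f f _ (@discontN f) cf cf). Qed.
Lemma cxkS f : CXK X f -> CXK X (fun x => Num.sqrt (f x)).
Proof. by move=> cf; exact: (@cxk_sub f f _ (@discontS f) cf cf). Qed.
Lemma cxkC (c : R) : CXK X (cst c : X -> R).
Proof. by apply: cxk_cont => x; exact: cst_continuous. Qed.

End Basic.
Arguments cxkD {R X f g}.
Arguments cxkM {R X f g}.
Arguments cxkN {R X f}.
Arguments cxkS {R X f}.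


Section P1.
Context {R : realType}.

Lemma isolated_cont (X : topologicalType) (f : X -> R) x :
  ~ nonisolated_pts X x -> {for x, continuous f}.
Proof.
move=> /contrapT [_ [V Vx VE]].
have Vx1 : V = [set x] by rewrite -VE setIT.
move=> B /nbhs_singleton Bfx; apply: (filterS _ Vx); rewrite Vx1 => y -> //.
Qed.

Lemma all_cxk (X : metricType R) : compact (nonisolated_pts X) ->
  forall f : X -> R, CXK X f.
Proof.
move=> cL f; rewrite /CXK /=; apply: (subclosed_compact _ cL); first exact: closed_closure.
apply: closure_sub_closed; first exact: compact_closed (@metric_hausdorff _ _) cL.
move=> x Dx; apply: contrapT => nL; apply: Dx; exact: isolated_cont.
Qed.

Lemma two_three (X : metricType R) : compact (nonisolated_pts X) ->
  exists Y : topologicalType, ring_isomorphic (CXK X) (@CY R Y).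
Proof.
move=> cL; exists (discrete_topology X); exists id; split => //.
split.
- move=> f _ x B /nbhs_singleton Bfx; apply: (filterS _ (discrete_set1 x)) => y -> //.
- by move=> f g _ _.
- by move=> f _; exists f => //; exact: all_cxk.
Qed.

End P1.


Lemma small_inv {R : realType} (e : R) : 0 < e -> exists k : nat, k.+1%:R^-1 < e.
Proof.
move=> e0; have [N _ /(_ N)/(_ (leqnn _)) Ndel] := near_infty_natSinv_lt (PosNum e0).
by exists N.
Qed.

Section Three.
Context {R : realType} {X Y : topologicalType} (phi : (X -> R) -> (Y -> R)).
Hypotheses (hbij : set_bij (CXK X) (@CY R Y) phi)
  (hadd : forall f g, CXK X f -> CXK X g -> phi (f \+ g) = phi f \+ phi g)
  (hmul : forall f g, CXK X f -> CXK X g -> phi (f \* g) = phi f \* phi g)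
  (h1 : phi (cst 1) = cst 1).

Lemma phi_fun {f} : CXK X f -> continuous (phi f).
Proof. by move=> Af; have [hf _ _] := hbij; exact: hf. Qed.

Lemma phi0 : phi (cst 0) = cst 0.
Proof.
have := hadd _ _ (cxkC 0) (cxkC 0).
rewrite (_ : cst 0 \+ cst 0 = cst 0); last by apply/funext => x /=; rewrite addr0.
move=> E; apply/funext => y; have := congr1 (fun F => F y) E => /= Ey; lra.
Qed.

Lemma phiN {f} : CXK X f -> phi (fun x => - f x) = fun y => - phi f y.
Proof.
move=> Af; have := hadd _ _ Af (cxkN Af).
rewrite (_ : f \+ (fun x => - f x) = cst 0); last by apply/funext => x /=; rewrite subrr.
rewrite phi0 => E; apply/funext => y; have := congr1 (fun F => F y) E => /= Ey; lra.
Qed.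

Lemma phi_nat n : phi (cst n%:R) = cst n%:R.
Proof.
elim: n => [|n IH]; first exact: phi0.
have := hadd _ _ (cxkC n%:R) (cxkC 1).
rewrite (_ : cst n%:R \+ cst 1 = cst n.+1%:R); last by apply/funext => x /=; rewrite natr1.
by rewrite IH h1 => ->; apply/funext => x /=; rewrite natr1.
Qed.

Lemma phi_inv k : phi (cst k.+1%:R^-1) = cst k.+1%:R^-1.
Proof.
have := hmul _ _ (cxkC k.+1%:R^-1) (cxkC k.+1%:R).
have nz : k.+1%:R != 0 :> R by rewrite pnatr_eq0.
rewrite (_ : cst k.+1%:R^-1 \* cst k.+1%:R = cst 1); last first.
  by apply/funext => x /=; rewrite mulVf.
rewrite h1 phi_nat => E; apply/funext => y; have := congr1 (fun F => F y) E => /= Ey.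
apply: (mulIf nz); by rewrite mulVf // -Ey.
Qed.

Lemma phi_pos {h} : CXK X h -> (forall x, 0 <= h x) -> forall y, 0 <= phi h y.
Proof.
move=> Ah hp y.
have -> : h = (fun x => Num.sqrt (h x)) \* (fun x => Num.sqrt (h x)).
  by apply/funext => x; rewrite /= -expr2 sqr_sqrtr.
rewrite (hmul _ _ (cxkS Ah) (cxkS Ah)).
have := sqr_ge0 (phi (fun x => Num.sqrt (h x)) y); rewrite expr2; move=> H; exact H.
Qed.

Lemma phi_pos_inv {h} : CXK X h -> (forall y, 0 <= phi h y) -> forall x, 0 <= h x.
Proof.
move=> Ah hp x; have [_ hi hs] := hbij.
pose g := fun y => Num.sqrt (phi h y).
have Bg : CY Y g.
  move=> y; apply: (continuous_comp (phi_fun Ah y)); exact: sqrt_continuous.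
have [s As sg] := hs g Bg.
have : phi (s \* s) = phi h.
  rewrite hmul // sg; apply/funext => y; rewrite /g /= -expr2 sqr_sqrtr //.
move/hi => E; rewrite -E ?inE //=; first by rewrite -expr2 sqr_ge0.
exact: cxkM.
Qed.

Lemma phi_lin k a b : CXK X a -> CXK X b ->
  phi (cst k.+1%:R^-1 \+ (a \+ (fun x => - b x))) =
  fun y => k.+1%:R^-1 + (phi a y - phi b y).
Proof.
move=> Aa Ab; rewrite (hadd _ _ (cxkC _) (cxkD Aa (cxkN Ab))) (hadd _ _ Aa (cxkN Ab)) (phiN Ab) phi_inv.
by apply/funext.
Qed.

Lemma phi_bound k a b : CXK X a -> CXK X b ->
  (forall x, `|a x - b x| <= k.+1%:R^-1) <-> (forall y, `|phi a y - phi b y| <= k.+1%:R^-1).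
Proof.
move=> Aa Ab; have Ah1 := cxkD (cxkC k.+1%:R^-1) (cxkD Aa (cxkN Ab)).
have Ah2 := cxkD (cxkC k.+1%:R^-1) (cxkD Ab (cxkN Aa)).
split => H z.
- have q1 : 0 <= k.+1%:R^-1 + (phi a z - phi b z).
    have := phi_pos Ah1; rewrite phi_lin // => /(_ _ z); apply => x /=.
    by have := H x; rewrite ler_norml => /andP[l1 l2]; move: l1 l2; move: (k.+1%:R^-1) => e l1 l2; lra.
  have q2 : 0 <= k.+1%:R^-1 + (phi b z - phi a z).
    have := phi_pos Ah2; rewrite phi_lin // => /(_ _ z); apply => x /=.
    by have := H x; rewrite ler_norml => /andP[l1 l2]; move: l1 l2; move: (k.+1%:R^-1) => e l1 l2; lra.
  rewrite ler_norml; apply/andP; split; move: q1 q2; move: (k.+1%:R^-1) => e q1 q2; lra.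
- have q1 : 0 <= k.+1%:R^-1 + (a z - b z).
    have := phi_pos_inv Ah1; rewrite phi_lin // => /(_ _ z) /=; apply => y.
    by have := H y; rewrite ler_norml => /andP[l1 l2]; move: l1 l2; move: (k.+1%:R^-1) => e l1 l2; lra.
  have q2 : 0 <= k.+1%:R^-1 + (b z - a z).
    have := phi_pos_inv Ah2; rewrite phi_lin // => /(_ _ z) /=; apply => y.
    by have := H y; rewrite ler_norml => /andP[l1 l2]; move: l1 l2; move: (k.+1%:R^-1) => e l1 l2; lra.
  rewrite ler_norml; apply/andP; split; move: q1 q2; move: (k.+1%:R^-1) => e q1 q2; lra.
Qed.

Theorem three_one : closed_unif_limits (@CXK R X).
Proof.
move=> u f Au uf.
have [hf hi hs] := hbij.
pose v n := phi (u n).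
have Cv n : continuous (v n) := phi_fun (Au n).
have S1 k : exists N, forall n, (N <= n)%N -> forall x, `|u n x - f x| <= k.+1%:R^-1.
  have [|N HN] := uf (k.+1%:R^-1); first by rewrite invr_gt0 ltr0Sn.
  by exists N => n Nn x; apply/ltW/HN.
have S2 k : exists N, forall n m, (N <= n)%N -> (N <= m)%N ->
    forall y, `|v n y - v m y| <= k.+1%:R^-1.
  have [|k' Hk'] := @small_inv R (k.+1%:R^-1 / 2).
    by rewrite divr_gt0 // invr_gt0 ltr0Sn.
  have [N HN] := S1 k'.
  exists N => n m Nn Nm; apply/(phi_bound k _ _ (Au n) (Au m)) => x.
  have := HN n Nn x; have := HN m Nm x; rewrite !ler_norml => /andP[a1 a2] /andP[b1 b2].
  move: a1 a2 b1 b2 Hk'; move: (k'.+1%:R^-1) (k.+1%:R^-1) => e' e.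
  move=> a1 a2 b1 b2 Hk'; apply/andP; split; lra.
have Cy y : cvg ((fun n => v n y) @ \oo).
  apply: cauchy_cvg; apply: cauchy_exP => eps eps0.
  have [k Hk] := small_inv _ eps0; have [N HN] := S2 k.
  exists (v N y); exists N => // n /= Nn.
  rewrite -ball_normE /=.
  exact: le_lt_trans (HN N n (leqnn _) Nn y) Hk.
pose g y := lim ((fun n => v n y) @ \oo).
have S4 k : exists N, forall n, (N <= n)%N -> forall y, `|g y - v n y| <= k.+1%:R^-1.
  have [N HN] := S2 k; exists N => n Nn y.
  have L1 : v n y - k.+1%:R^-1 <= g y.
    apply: limr_ge; first exact: Cy.
    exists N => // m /= Nm; have := HN n m Nn Nm y; rewrite ler_norml => /andP[l1 l2].
    move: l1 l2; move: (k.+1%:R^-1) => e l1 l2; lra.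
  have L2 : g y <= v n y + k.+1%:R^-1.
    apply: limr_le; first exact: Cy.
    exists N => // m /= Nm; have := HN n m Nn Nm y; rewrite ler_norml => /andP[l1 l2].
    move: l1 l2; move: (k.+1%:R^-1) => e l1 l2; lra.
  rewrite ler_norml; move: L1 L2; move: (k.+1%:R^-1) (g y) => e gy L1 L2.
  apply/andP; split; lra.
have Bg : CY Y g.
  move=> y; apply/cvgrPdist_lt => eps eps0.
  have [|k Hk] := small_inv (eps / 3); first by rewrite divr_gt0.
  have [N HN] := S4 k.
  have /cvgrPdist_lt/(_ (eps / 3)) := Cv N y.
  move=> /(_ _); rewrite divr_gt0 // => /(_ isT).
  apply: filterS => t Ht.
  have a1 := HN N (leqnn _) y; have a2 := HN N (leqnn _) t.
  move: a1 a2 Ht; rewrite !ler_norml ltr_norml => /andP[a1 a1'] /andP[a2 a2'] /andP[h h'].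
  rewrite ltr_norml; move: a1 a1' a2 a2' h h' Hk.
  move: (k.+1%:R^-1) (g y) (g t) (v N y) (v N t) => e gy gt vy vt.
  move=> a1 a1' a2 a2' h h' Hk; apply/andP; split; lra.
have [h Ah hg] := hs g Bg.
have S7 k : exists N, forall n, (N <= n)%N -> forall x, `|h x - u n x| <= k.+1%:R^-1.
  have [N HN] := S4 k; exists N => n Nn.
  by apply/(phi_bound k _ _ Ah (Au n)) => y; rewrite hg; exact: HN.
suff -> : f = h by [].
apply/funext => x; apply: contrapT => nfh.
have d0 : 0 < `|h x - f x| by rewrite normr_gt0 subr_eq0; apply/eqP => E; apply: nfh.
have [|k Hk] := small_inv (`|h x - f x| / 2); first by rewrite divr_gt0.
have [N1 H1] := S7 k; have [N2 H2] := S1 k.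
have a1 := H1 (maxn N1 N2) (leq_maxl _ _) x.
have a2 := H2 (maxn N1 N2) (leq_maxr _ _) x.
have T := ler_normD (h x - u (maxn N1 N2) x) (u (maxn N1 N2) x - f x).
rewrite addrA subrK in T.
move: a1 a2 T Hk d0; move: (k.+1%:R^-1) (`|h x - f x|) => e d.
move: (`|h x - _|) (`|_ - f x|) => a b; lra.
Qed.

End Three.


Section Four.
Context {R : realType} {X : metricType R}.

Lemma seq_cluster (x : nat -> X) (K : set X) : compact K -> (forall n, K (x n)) ->
  exists c : X, forall e : R, 0 < e -> forall N, exists n, (N <= n)%N /\ ball c e (x n).
Proof.
move=> cK Kx.
have HK : (x @ \oo) K by exists 0%N => // n _; exact: Kx.
have [c [_ cl]] := cK _ _ HK.
exists c => e e0 N.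
have := cl [set z | exists2 n, (N <= n)%N & x n = z] (ball c e).
case.
- by exists N => // n /= Nn; exists n.
- exact: nbhsx_ballx.
- by move=> z [[n Nn <-] bz]; exists n.
Qed.

Lemma L_closed : closed (nonisolated_pts X).
Proof.
move=> c cc [_ [V Vc VE]].
have [z [Lz Vz]] := cc V Vc.
have : (V `&` setT) z by [].
rewrite VE => zc; apply: Lz; rewrite zc; split; [exact: mem_set|by exists V].
Qed.

Definition greedy {T : Type} (g : seq T -> T) : nat -> seq T :=
  fix pts n := if n is n'.+1 then rcons (pts n') (g (pts n')) else [::].

Lemma greedy_mem {T : eqType} (g : seq T -> T) m n : (m < n)%N ->
  g (greedy g m) \in greedy g n.
Proof.
elim: n => // n IH; rewrite ltnS leq_eqVlt => /orP[/eqP ->|/IH H].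
  by rewrite /= mem_rcons in_cons eqxx.
by rewrite /= mem_rcons in_cons H orbT.
Qed.

Lemma noncompact_bad_seq : ~ compact (nonisolated_pts X) ->
  exists x : nat -> X, (forall n, nonisolated_pts X (x n)) /\
    (forall K, compact K -> ~ (forall n, K (x n))).
Proof.
set L := nonisolated_pts X.
move=> ncL.
have [F [PF [FL Fn]]] : exists F : set_system X,
    ProperFilter F /\ F L /\ ~ (L `&` cluster F !=set0).
  apply: contrapT => H; apply: ncL => F PF FL; apply: contrapT => H2; apply: H.
  by exists F.
have [G [UG FG]] := ultraFilterLemma PF.
have PG : ProperFilter G by exact: ultra_proper.
have GL : G L := FG _ FL.
have noc c : exists2 e : R, 0 < e & ~ G (ball c e).
  have ncl : ~ cluster G c.
    move=> cG; apply: Fn; exists c; split.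
    - apply: L_closed => B Bc; exact: cG L B GL Bc.
    - move=> A B FA Bc; exact: cG (FG _ FA) Bc.
  apply: contrapT => H; apply: ncl => A B GA Bc.
  move/nbhs_ballP: Bc => [e e0 eB].
  have GB : G (ball c e) by apply: contrapT => nG; apply: H; exists e.
  have [z [Az bz]] := filter_ex (filterI GA GB).
  by exists z; split => //; exact: eB.
have [P|nP] := pselect (forall e : R, 0 < e -> exists p : X, G (ball p e)).
- have hp k : exists p : X, G (ball p k.+1%:R^-1) by apply: P; rewrite invr_gt0 ltr0Sn.
  pose p k := projT1 (cid (hp k)).
  have Gp k : G (ball (p k) k.+1%:R^-1) := projT2 (cid (hp k)).
  pose A k := [set z | L z /\ forall i, (i <= k)%N -> ball (p i) i.+1%:R^-1 z].
  have GA k : G (A k).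
    elim: k => [|k IH].
      apply: filterS (filterI GL (Gp 0%N)) => z [Lz Bz]; split => // i.
      by rewrite leqn0 => /eqP ->.
    apply: filterS (filterI IH (Gp k.+1)) => z [[Lz Hz] Bz]; split => // i.
    rewrite leq_eqVlt => /orP[/eqP ->//|]; rewrite ltnS; exact: Hz.
  have hx k : exists z, A k z by exact: filter_ex (GA k).
  pose x k := projT1 (cid (hx k)).
  have Ax k : A k (x k) := projT2 (cid (hx k)).
  exists x; split => [n|K cK Kx]; first by have [] := Ax n.
  have [c cc] := seq_cluster _ _ cK Kx.
  have [e e0 nGe] := noc c.
  have [|k Hk] := small_inv (e / 4); first by rewrite divr_gt0.
  have [|n [kn bn]] := cc (e / 2) _ k; first by rewrite divr_gt0.
  apply: nGe; apply: filterS (Gp k) => y yb.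
  have bxn : ball (p k) k.+1%:R^-1 (x n) by have [_] := Ax n; apply.
  have H1 := ball_triangle bn (ball_sym bxn).
  have H2 := ball_triangle H1 yb.
  apply: le_ball H2; move: Hk; move: (k.+1%:R^-1) => ek Hk; lra.
- have [e e0 He] : exists2 e : R, 0 < e & forall p : X, ~ G (ball p e).
    apply: contrapT => H; apply: nP => e e0; apply: contrapT => H2; apply: H.
    by exists e => // p Gp; apply: H2; exists p.
  have GC p : G (~` ball p e).
    by case: (in_ultra_setVsetC (ball p e) UG) => // /He.
  pose S (s : seq X) := [set z | L z /\ forall q, q \in s -> ~ ball q e z].
  have GS s : G (S s).
    elim: s => [|q s IH].
      by apply: filterS GL => z Lz; split.
    apply: filterS (filterI IH (GC q)) => z [[Lz Hz] nq]; split => // q'.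
    rewrite in_cons => /orP[/eqP ->//|]; exact: Hz.
  have hx s : exists z, S s z by exact: filter_ex (GS s).
  pose g s := projT1 (cid (hx s)).
  have Sg s : S s (g s) := projT2 (cid (hx s)).
  pose x n := g (greedy g n).
  have sep m n : (m < n)%N -> ~ ball (x m) e (x n).
    move=> mn; have [_ H] := Sg (greedy g n); apply: H; exact: greedy_mem.
  exists x; split => [n|K cK Kx]; first by have [] := Sg (greedy g n).
  have [c cc] := seq_cluster _ _ cK Kx.
  have e20 : 0 < e / 2 by rewrite divr_gt0.
  have [n0 [_ b0]] := cc (e / 2) e20 0%N.
  have [n1 [n01 b1]] := cc (e / 2) e20 n0.+1.
  apply: (sep n0 n1 n01).
  rewrite [e in ball _ e]splitr; exact: ball_triangle (ball_sym b0) b1.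
Qed.

Lemma bad_seq_nonclosed (x : nat -> X) : (forall n, nonisolated_pts X (x n)) ->
  (forall K, compact K -> ~ (forall n, K (x n))) -> ~ closed_unif_limits (@CXK R X).
Proof.
move=> Lx bad cl.
pose r : R := 2^-1.
have r0 : 0 <= r by rewrite invr_ge0.
have r1 : r <= 1 by rewrite invf_le1 // ler1n.
pose w (m : nat) : R := r ^+ m.
have w_gt0 m : 0 < w m by rewrite exprn_gt0 // invr_gt0.
have w_le m m' : (m <= m')%N -> w m' <= w m by move=> mm'; exact: ler_wiXn2l.
have w_lt m m' : (m < m')%N -> 2 * w m' <= w m.
  move=> mm'; have := w_le _ _ mm'; rewrite /w exprS => H.
  have -> : r ^+ m = 2 * (r * r ^+ m) by rewrite mulrA divff ?mul1r // pnatr_eq0.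
  by rewrite ler_pM2l.
have w_small e : 0 < e -> exists N, w N < e.
  move=> e0; have [k Hk] := small_inv _ e0; exists k; apply: le_lt_trans Hk.
  rewrite /w /r exprVn lef_pV2 ?posrE ?exprn_gt0 ?ltr0Sn //.
  have := ltn_expl k (isT : (1 < 2)%N); rewrite -(ler_nat R) natrX => H.
  exact: H.
pose inR y := exists n, x n = y.
pose mi y := xget 0%N [set m | x m = y /\ forall n, x n = y -> (m <= n)%N].
have miP y : inR y -> x (mi y) = y /\ (forall n, x n = y -> (mi y <= n)%N).
  move=> [n xn].
  have ex2 : exists m, [set m | x m = y /\ forall n, x n = y -> (m <= n)%N] m.
    have ex : exists n, `[< x n = y >] by exists n; apply/asboolP.
    case: (ex_minnP ex) => m /asboolP xm minm; exists m; split => // k xk.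
    by apply: minm; exact/asboolP.
  exact: (xgetPex 0%N ex2).
pose f y := if `[< inR y >] then w (mi y) else 0.
pose fN (N : nat) y := if `[< inR y >] && (mi y <= N)%N then w (mi y) else 0.
have hX := @metric_hausdorff R X.
have cfN N : CXK X (fN N).
  pose S N := [set z | exists2 i, (i <= N)%N & x i = z].
  have cS : compact (S N).
    elim: N {cl} => [|N IH].
      rewrite (_ : S 0%N = [set x 0%N]); first exact: compact_set1.
      apply/seteqP; split => z /=.
        by move=> [i]; rewrite leqn0 => /eqP -> <-.
      by move=> ->; exists 0%N.
    rewrite (_ : S N.+1 = S N `|` [set x N.+1]); first by apply: compactU; [exact: IH|exact: compact_set1].
    apply/seteqP; split => z /=.
      move=> [i]; rewrite leq_eqVlt => /orP[/eqP -> <-|iN xi]; first by right.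
      by left; exists i.
    by move=> [[i iN <-]|->]; [exists i => //; exact: leqW | exists N.+1].
  have clS : closed (S N) := compact_closed hX cS.
  have z0 z : ~ S N z -> fN N z = 0.
    move=> nz; rewrite /fN; case: (asboolP (inR z)) => //= iz.
    case: leqP => // zN; exfalso; apply: nz; exists (mi z) => //; exact: (miP _ iz).1.
  rewrite /CXK /=; apply: (subclosed_compact _ cS); first exact: closed_closure.
  apply: closure_sub_closed => // y Dy; apply: contrapT => nS; apply: Dy.
  have U : nbhs y (~` S N) by apply: open_nbhs_nbhs; split => //; rewrite openC.
  move=> B /nbhs_singleton By; apply: filterS U => z Cz /=.
  by rewrite z0 // -(z0 y nS).
have ucv : unif_cvg fN f.
  move=> e e0; have [N HN] := w_small e e0; exists N => n Nn y.
  rewrite /fN /f; case: (asboolP (inR y)) => iy /=; last by rewrite subrr normr0.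
  case: leqP => mn; first by rewrite subrr normr0.
  rewrite sub0r normrN ger0_norm ?(ltW (w_gt0 _)) //; apply: le_lt_trans HN.
  by apply: w_le; apply: leq_trans Nn (ltnW mn).
have Dx n : discont_pts f (x n).
  move=> cf; set p := x n; have ip : inR p by exists n.
  have fp : f p = w (mi p) by rewrite /f; case: (asboolP (inR p)).
  have := (cvgrPdist_lt _ _).1 cf (w (mi p) / 2).
  rewrite divr_gt0 // => /(_ _ isT) nz.
  apply: (Lx n); split; first exact: mem_set.
  exists [set p]; last by rewrite setIT.
  apply: filterS nz => z; rewrite fp.
  rewrite /f; case: (asboolP (inR z)) => iz; last first.
    by rewrite subr0 gtr0_norm // ltr_pdivlMr // => H; have := w_gt0 (mi p); lra.
  have := w_gt0 (mi p); have := w_gt0 (mi z).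
  case: (ltngtP (mi z) (mi p)) => [zp|pz|zp].
  - have := w_lt _ _ zp; move: (w (mi z)) (w (mi p)) => a b H1 H2 H3.
    by rewrite ltr_norml => /andP[]; lra.
  - have := w_lt _ _ pz; move: (w (mi z)) (w (mi p)) => a b H1 H2 H3.
    by rewrite ltr_norml => /andP[]; lra.
  - by move=> _ _ _; rewrite -(miP _ iz).1 zp (miP _ ip).1.
have nCf : ~ CXK X f.
  move=> cf; apply: (bad _ cf) => k; apply: subset_closure; exact: Dx k.
by apply: nCf; apply: (cl fN f).
Qed.

End Four.


Theorem corollary3p4 (R : realType) (X : metricType R) :
  [<-> closed_unif_limits (@CXK R X);
       compact (@nonisolated_pts X);
       exists Y : topologicalType, ring_isomorphic (@CXK R X) (@CY R Y)].
Proof.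
tfae.
- move=> cl; apply: contrapT => ncL.
  have [x [Lx bad]] := noncompact_bad_seq ncL.
  exact: bad_seq_nonclosed Lx bad cl.
- exact: two_three.
- move=> [Y [phi [hbij hadd hmul h1]]]; exact: three_one hbij hadd hmul h1.
Qed.
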